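(* Let $(W,S)$ be a dihedral Coxeter system (i.e. $|S|=2$). Let $u,v\in W$ with $u<v$, and let $R=\{\alpha_t\in\Phi^+:\ u\leq vt\lhd v\}$ and $R'=\{\alpha_t\in\Phi^+:\ u\lhd ut\leq v\}$. Then the intersections $R\cap\operatorname{Cone}(R')$ and $R'\cap\operatorname{Cone}(R)$ are non-empty.
   Context: $\Phi^+$ is the set of positive roots of the standard geometric representation; $t$ ranges over reflections $T=\{wsw^{-1}\}$ and $\alpha_t$ is the positive root of $t$. $\leq$ is Bruhat order, $\lhd$ its covering relation. $\operatorname{Cone}(A)$ is the set of finite nonnegative linear combinations of elements of $A$. *)

(* Defs.v *)
From Stdlib Require Import Reals Relations.
From HB Require Import structures.
From mathcomp Require Import all_boot all_order all_algebra.
From mathcomp Require Import Rstruct.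
Set Implicit Arguments. Unset Strict Implicit. Unset Printing Implicit Defensive.
Import Order.TTheory GRing.Theory Num.Theory.
Local Open Scope ring_scope.

(* A dihedral Coxeter system (W,S), S = {s_0, s_1}, is determined by
   m = m(s_0,s_1) in {2,3,...} U {oo}; we encode it as [m : option nat]
   (None = oo).  W is realised through its (faithful) standard geometric
   representation on V = R^2 with basis the simple roots alpha_0, alpha_1. *)

Definition vec := 'cV[R]_2.
Definition mat := 'M[R]_2.

(* B(alpha_0, alpha_1) = - cos (pi / m), and -1 if m = oo. *)
Definition cosm (m : option nat) : R :=
  match m with Some k => cos (PI / INR k)%R | None => 1 end.

Definition Bmat (m : option nat) : mat :=
  \matrix_(i < 2, j < 2) (if i == j then 1 else - cosm m).

Definition Bform (m : option nat) (x y : vec) : R := (x^T *m Bmat m *m y) 0 0.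

Definition simple_root (i : 'I_2) : vec := delta_mx i 0.

Definition refl (m : option nat) (beta : vec) : mat :=
  1%:M - 2%:R *: (beta *m (beta^T *m Bmat m)).

Definition gen (m : option nat) (i : 'I_2) : mat := refl m (simple_root i).

Definition evalw (m : option nat) (w : seq 'I_2) : mat :=
  \prod_(i <- w) gen m i.

Definition inW (m : option nat) (x : mat) : Prop := exists w, x = evalw m w.

Definition has_len (m : option nat) (x : mat) (n : nat) : Prop :=
  (exists w, size w = n /\ evalw m w = x) /\
  (forall w, evalw m w = x -> (n <= size w)%N).

Definition isRefl (m : option nat) (t : mat) : Prop :=
  exists x i, inW m x /\ t = x *m gen m i *m invmx x.

Definition bruhat_step (m : option nat) (x y : mat) : Prop :=
  inW m x /\ exists t, isRefl m t /\ y = x *m t /\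
    exists a b, has_len m x a /\ has_len m y b /\ (a < b)%N.

Definition bruhat_le (m : option nat) (x y : mat) : Prop :=
  x = y \/ clos_trans mat (bruhat_step m) x y.

Definition bruhat_lt (m : option nat) (x y : mat) : Prop :=
  bruhat_le m x y /\ x <> y.

Definition bruhat_cover (m : option nat) (x y : mat) : Prop :=
  bruhat_lt m x y /\
  forall z, bruhat_le m x z -> bruhat_le m z y -> z = x \/ z = y.

Definition isRoot (m : option nat) (beta : vec) : Prop :=
  exists x i, inW m x /\ beta = x *m simple_root i.

Definition isPosRoot (m : option nat) (beta : vec) : Prop :=
  isRoot m beta /\ forall j : 'I_2, 0 <= beta j 0.

Definition root_of (m : option nat) (t : mat) (beta : vec) : Prop :=
  isRefl m t /\ isPosRoot m beta /\ refl m beta = t.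

Definition Cone (A : vec -> Prop) (x : vec) : Prop :=
  exists (n : nat) (c : 'I_n -> R) (b : 'I_n -> vec),
    (forall k, 0 <= c k /\ A (b k)) /\ x = \sum_(k < n) c k *: b k.

(* Main.v *)
Require Import Defs.
From Stdlib Require Import Reals Lra Relations.
From mathcomp Require Import all_boot all_order all_algebra.
From mathcomp Require Import Rstruct.
Set Implicit Arguments. Unset Strict Implicit. Unset Printing Implicit Defensive.
Import Order.TTheory GRing.Theory Num.Theory.

Fixpoint sq (T : pzRingType) (c : T) (n : nat) : T :=
  match n with
  | 0 => -1
  | 1 => 0
  | (p.+1 as q).+1 => 2%:R * c * sq c q - sq c p
  end%R.

Section Trig.
Local Open Scope R_scope.

Lemma sin_rec x t : sin (x + 2 * t) = 2 * cos t * sin (x + t) - sin x.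
Proof.
have -> : x + 2 * t = (x + t) + t by ring.
have E : sin x = sin ((x + t) - t) by f_equal; ring.
rewrite E sin_plus sin_minus; ring.
Qed.

Lemma sq_sin (k : nat) n : (1 <= k)%N ->
  Rmult (sq (cos (PI / INR k)) n) (sin (PI / INR k)) = sin (Rmult (INR n - 1) (PI / INR k)).
Proof.
move=> hk; set t := PI / INR k.
elim/ltn_ind: n => -[|[|n]] IH.
- have -> : sq (cos t) 0 = -1 by [].
  have -> : (INR 0 - 1) * t = - t by simpl; ring.
  rewrite sin_neg; ring.
- have -> : sq (cos t) 1 = 0 by [].
  have -> : (INR 1 - 1) * t = 0 by simpl; ring.
  rewrite sin_0; ring.
- have IH1 := IH n.+1 (ltnSn _). have IH0 := IH n (leqW (ltnSn _)).
  have -> : sq (cos t) n.+2 = 2 * cos t * sq (cos t) n.+1 - sq (cos t) n.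
    by rewrite /= -/(sq _ n.+1); congr (_ * _ * _ - _); rewrite /= -RplusE; ring.
  have -> : (INR n.+2 - 1) * t = (INR n - 1) * t + 2 * t by rewrite !S_INR; ring.
  rewrite sin_rec.
  have -> : (INR n - 1) * t + t = (INR n.+1 - 1) * t by rewrite !S_INR; ring.
  rewrite -IH1 -IH0.
  ring.
Qed.

Section K.
Variable k : nat.
Hypothesis hk : (2 <= k)%N.
Let t := PI / INR k.
Let c := cos t.

Lemma INRk_pos : 0 < INR k.
Proof. apply: lt_0_INR. apply/ssrnat.ltP; exact: leq_trans hk. Qed.
Lemma kt : INR k * t = PI.
Proof. rewrite /t; field; have := INRk_pos; lra. Qed.
Lemma t_pos : 0 < t.
Proof. rewrite /t; apply: Rdiv_lt_0_compat; [exact: PI_RGT_0 | exact: INRk_pos]. Qed.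
Lemma t_ltPI : t < PI.
Proof.
have H2 : 2 <= INR k by apply: (le_INR 2); apply/ssrnat.leP.
have := kt; have := t_pos; have := PI_RGT_0; nra.
Qed.
Lemma s_pos : 0 < sin t.
Proof. apply: sin_gt_0; [exact: t_pos | exact: t_ltPI]. Qed.

Lemma sqj j : Rmult (sq c j.+1) (sin t) = sin (INR j * t).
Proof.
rewrite /c /t sq_sin; last exact: leq_trans hk.
by rewrite S_INR; f_equal; ring.
Qed.

Lemma sq_pos j : (1 <= j)%N -> (j < k)%N -> 0 < sq c j.+1.
Proof.
move=> h1 h2.
have Hj : 1 <= INR j by apply: (le_INR 1); apply/ssrnat.leP.
have Hjk : INR j < INR k by apply: lt_INR; apply/ssrnat.ltP.
have Hs : 0 < sin (INR j * t).
  apply: sin_gt_0; first by have := t_pos; nra.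
  have := kt; have := t_pos; nra.
rewrite -sqj in Hs; have := s_pos; move=> Hs'.
apply: (Rmult_lt_reg_r (sin t)) => //; rewrite Rmult_0_l; exact: Hs.
Qed.

Lemma sq_nneg j : (j <= k)%N -> 0 <= sq c j.+1.
Proof.
move=> h2.
have Hj : 0 <= INR j by apply: pos_INR.
have Hjk : INR j <= INR k by apply: le_INR; apply/ssrnat.leP.
have Hs : 0 <= sin (INR j * t).
  apply: sin_ge_0; first by have := t_pos; nra.
  have := kt; have := t_pos; nra.
rewrite -sqj in Hs; have := s_pos; move=> Hs'.
apply: (Rmult_le_reg_r (sin t)) => //; rewrite Rmult_0_l; exact: Hs.
Qed.

Lemma sq_neg j : (k < j)%N -> (j < k.*2)%N -> sq c j.+1 < 0.
Proof.
move=> h1 h2.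
have Hj : INR k < INR j by apply: lt_INR; apply/ssrnat.ltP.
have Hjk : INR j < 2 * INR k.
  have -> : 2 * INR k = INR k.*2 by rewrite -addnn plus_INR; ring.
  by apply: lt_INR; apply/ssrnat.ltP.
have Hs : sin (INR j * t) < 0.
  apply: sin_lt_0; have := kt; have := t_pos; nra.
rewrite -sqj in Hs; have := s_pos; move=> Hs'.
apply: (Rmult_lt_reg_r (sin t)) => //; rewrite Rmult_0_l; exact: Hs.
Qed.

Lemma sq_k : sq c k = 1.
Proof.
have := sq_sin k (leq_trans (isT : (1 <= 2)%N) hk); rewrite -/t -/c.
have -> : (INR k - 1) * t = PI - t by have := kt; lra.
rewrite sin_PI_x => H; apply: (Rmult_eq_reg_r (sin t)); last by have := s_pos; lra.
by rewrite H; ring.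
Qed.
Lemma sq_k1 : sq c k.+1 = 0.
Proof.
have := sqj k; rewrite kt sin_PI => H; apply: (Rmult_eq_reg_r (sin t)); last by have := s_pos; lra.
by rewrite H; ring.
Qed.
Lemma sq_k2 : sq c k.+2 = -1.
Proof.
have := sqj k.+1; rewrite S_INR.
have -> : (INR k + 1) * t = t + PI by have := kt; lra.
rewrite neg_sin => H; apply: (Rmult_eq_reg_r (sin t)); last by have := s_pos; lra.
by rewrite H; ring.
Qed.
End K.
End Trig.

From mathcomp Require Import ring.
Local Open Scope ring_scope.

Notation al := simple_root.
Lemma I2P (i : 'I_2) : i = ord0 \/ i = ord_max.
Proof. case: i => [[|[|//]]] Hi; [left|right]; exact: val_inj. Qed.
Definition flip (i : 'I_2) : 'I_2 := if i == ord0 then ord_max else ord0.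
Lemma flipK i : flip (flip i) = i.
Proof. by case: (I2P i) => ->. Qed.
Lemma flip_neq i : flip i != i.
Proof. by case: (I2P i) => ->. Qed.
Lemma neq_flip i j : i != j -> j = flip i.
Proof. by case: (I2P i) => ->; case: (I2P j) => ->. Qed.
Lemma flip_eqF i : (i == flip i) = false.
Proof. by case: (I2P i) => ->. Qed.
Lemma flip_eqF' i : (flip i == i) = false.
Proof. by case: (I2P i) => ->. Qed.

Lemma jP (j l : 'I_2) : l = j \/ l = flip j.
Proof. by case: (I2P j) => ->; case: (I2P l) => ->; auto. Qed.

Lemma Bform_al m i j : Bform m (al i) (al j) = if i == j then 1 else - cosm m.
Proof.
rewrite /Bform /al /Bmat !mxE.
rewrite !big_ord_recl !big_ord0 !mxE !big_ord_recl !big_ord0 !mxE.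
by case: (I2P i) => ->; case: (I2P j) => ->; rewrite /= ?mul1r ?mul0r ?mulr0 ?mulr1 ?addr0 ?add0r.
Qed.

Lemma gen_mul m j (x : vec) : gen m j *m x = x - (2 * Bform m (al j) x) *: al j.
Proof.
rewrite /gen /refl mulmxBl mul1mx -scalemxAl -!mulmxA.
rewrite [(al j)^T *m _]mulmxA [((al j)^T *m Bmat m *m x)]mx11_scalar mul_mx_scalar scalerA.
by rewrite /Bform.
Qed.

Lemma gen_self m j : gen m j *m al j = - al j.
Proof. rewrite gen_mul Bform_al eqxx mulr1 scaler_nat. by rewrite mulr2n opprD addrA subrr add0r. Qed.

Lemma gen_flip m j : gen m j *m al (flip j) = al (flip j) + (2 * cosm m) *: al j.
Proof. by rewrite gen_mul Bform_al flip_eqF mulrN scaleNr opprK. Qed.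

Lemma BformDl m p q x y z : Bform m (p *: x + q *: y) z = p * Bform m x z + q * Bform m y z.
Proof. by rewrite /Bform linearD !linearZ /= !mulmxDl -!scalemxAl !mxE. Qed.
Lemma BformDr m p q x y z : Bform m z (p *: x + q *: y) = p * Bform m z x + q * Bform m z y.
Proof. by rewrite /Bform !mulmxDr -!scalemxAr !mxE. Qed.

Lemma BformAl m x y z : Bform m (x + y) z = Bform m x z + Bform m y z.
Proof. by rewrite /Bform linearD /= !mulmxDl !mxE. Qed.
Lemma BformAr m x y z : Bform m z (x + y) = Bform m z x + Bform m z y.
Proof. by rewrite /Bform !mulmxDr !mxE. Qed.
Lemma BformZl m p x z : Bform m (p *: x) z = p * Bform m x z.
Proof. by rewrite /Bform linearZ /= -!scalemxAl !mxE. Qed.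
Lemma BformZr m p x z : Bform m z (p *: x) = p * Bform m z x.
Proof. by rewrite /Bform -!scalemxAr !mxE. Qed.
Lemma BformNl m x z : Bform m (- x) z = - Bform m x z.
Proof. by rewrite -scaleN1r BformZl mulN1r. Qed.
Lemma BformNr m x z : Bform m z (- x) = - Bform m z x.
Proof. by rewrite -scaleN1r BformZr mulN1r. Qed.

Lemma mx_ext (A B : mat) : (forall l, A *m al l = B *m al l) -> A = B.
Proof.
move=> H; apply/matrixP => a b; have := congr1 (fun M : vec => M a 0) (H b).
by rewrite /al -!colE !mxE.
Qed.

Lemma gen_invol m j : gen m j *m gen m j = 1%:M.
Proof.
apply: mx_ext => l; rewrite -mulmxA mul1mx.
case: (jP j l) => ->.
  by rewrite gen_self mulmxN gen_self opprK.
rewrite gen_flip mulmxDr -scalemxAr gen_self gen_flip scalerN.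
by rewrite addrK.
Qed.

Lemma gen_inv_invar m j : (gen m j)^T *m Bmat m *m gen m j = Bmat m.
Proof.
apply/matrixP => a b.
have E : forall M : mat, M a b = ((al a)^T *m M *m al b) 0 0.
  move=> M; rewrite /al -colE.
  rewrite !mxE !big_ord_recl !big_ord0 !mxE.
  case: (I2P a) => ->; rewrite /= ?mul1r ?mul0r ?addr0 ?add0r //.
  by congr (M _ b); apply: val_inj.
rewrite [LHS]E [RHS]E.
rewrite -/(Bform m (al a) (al b)).
have -> : (al a)^T *m ((gen m j)^T *m Bmat m *m gen m j) *m al b =
   (gen m j *m al a)^T *m Bmat m *m (gen m j *m al b) by rewrite trmx_mul !mulmxA.
rewrite -/(Bform m _ _).
case: (jP j a) => ->; case: (jP j b) => ->;
  rewrite ?gen_self ?gen_flip ?(BformNl, BformNr, BformAl, BformAr, BformZl, BformZr) !Bform_al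
    ?eqxx ?flip_eqF ?flip_eqF'. all: ring.
Qed.

Lemma evalw_nil m : evalw m [::] = 1%:M.
Proof. by rewrite /evalw big_nil. Qed.
Lemma evalw_cons m j w : evalw m (j :: w) = gen m j *m evalw m w.
Proof. by rewrite /evalw big_cons mulmxE. Qed.
Lemma evalw_cat m w1 w2 : evalw m (w1 ++ w2) = evalw m w1 *m evalw m w2.
Proof. by rewrite /evalw big_cat mulmxE. Qed.
Lemma evalw_rcons m w j : evalw m (rcons w j) = evalw m w *m gen m j.
Proof. by rewrite -cats1 evalw_cat /evalw big_cons big_nil mulmxE mulr1. Qed.

Lemma evalw_revK m w : evalw m (rev w) *m evalw m w = 1%:M.
Proof.
elim: w => [|j w IH]; first by rewrite evalw_nil mul1mx.
rewrite rev_cons evalw_rcons evalw_cons mulmxA -[evalw m (rev w) *m gen m j *m gen m j]mulmxA gen_invol mulmx1.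
exact: IH.
Qed.
Lemma evalw_Krev m w : evalw m w *m evalw m (rev w) = 1%:M.
Proof. by rewrite -{1}(revK w) evalw_revK. Qed.

Lemma invmx_evalw m w : invmx (evalw m w) = evalw m (rev w).
Proof.
have [U _] := mulmx1_unit (evalw_Krev m w).
by rewrite -[LHS]mulmx1 -(evalw_Krev m w) mulmxA mulVmx // mul1mx.
Qed.

Lemma evalw_invar m w : (evalw m w)^T *m Bmat m *m evalw m w = Bmat m.
Proof.
elim: w => [|j w IH]; first by rewrite evalw_nil trmx1 mul1mx mulmx1.
rewrite evalw_cons trmx_mul.
have -> : (evalw m w)^T *m (gen m j)^T *m Bmat m *m (gen m j *m evalw m w) =
  (evalw m w)^T *m ((gen m j)^T *m Bmat m *m gen m j) *m evalw m w by rewrite !mulmxA.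
by rewrite gen_inv_invar IH.
Qed.

Lemma refl_evalw m w j :
  refl m (evalw m w *m al j) = evalw m w *m gen m j *m evalw m (rev w).
Proof.
set x := evalw m w; set x' := evalw m (rev w).
have H : x^T *m Bmat m = Bmat m *m x'.
  by rewrite -[LHS]mulmx1 -(evalw_Krev m w) mulmxA evalw_invar.
rewrite /gen /refl mulmxBr mulmx1 mulmxBl (evalw_Krev m w).
congr (_ - _).
rewrite -scalemxAr -scalemxAl; congr (_ *: _).
rewrite trmx_mul -!mulmxA; congr (_ *m _); congr (_ *m _).
congr (_ *m _); exact: H.
Qed.


Definition letter (i : 'I_2) (p : nat) : 'I_2 := if odd p then flip i else i.
Definition alt (i : 'I_2) (n : nat) : seq 'I_2 := mkseq (letter i) n.
Definition Wd m i n := evalw m (alt i n).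

Lemma letter0 i : letter i 0 = i. Proof. by []. Qed.
Lemma letterS i p : letter i p.+1 = flip (letter i p).
Proof. by rewrite /letter /=; case: (odd p) => //=; rewrite flipK. Qed.
Lemma letter_letter i p q : letter (letter i p) q = letter i (p + q).
Proof. by rewrite /letter oddD; case: (odd p); case: (odd q) => //=; rewrite flipK. Qed.
Lemma letterSS i p : letter i p.+2 = letter i p.
Proof. by rewrite !letterS flipK. Qed.

Lemma size_alt i n : size (alt i n) = n. Proof. exact: size_mkseq. Qed.
Lemma altS i n : alt i n.+1 = rcons (alt i n) (letter i n). Proof. exact: mkseqS. Qed.
Lemma alt_cat i p q : alt i (p + q) = alt i p ++ alt (letter i p) q.
Proof.
elim: q => [|q IH]; first by rewrite addn0 cats0.
by rewrite addnS !altS IH rcons_cat letter_letter.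
Qed.
Lemma alt_cons i n : alt i n.+1 = i :: alt (flip i) n.
Proof. exact: (alt_cat i 1 n). Qed.
Lemma alt_rev i n : rev (alt i n.+1) = alt (letter i n) n.+1.
Proof.
elim: n => [|n IH] //.
rewrite altS rev_rcons IH [in RHS]alt_cons; congr (_ :: alt _ _).
by rewrite letterS flipK.
Qed.

Lemma WdS m i n : Wd m i n.+1 = Wd m i n *m gen m (letter i n).
Proof. by rewrite /Wd altS evalw_rcons. Qed.
Lemma Wd_cons m i n : Wd m i n.+1 = gen m i *m Wd m (flip i) n.
Proof. by rewrite /Wd alt_cons evalw_cons. Qed.
Lemma Wd_cat m i p q : Wd m i (p + q) = Wd m i p *m Wd m (letter i p) q.
Proof. by rewrite /Wd alt_cat evalw_cat. Qed.
Lemma Wd0 m i : Wd m i 0 = 1%:M. Proof. by rewrite /Wd /alt /= evalw_nil. Qed.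
Lemma Wd_rev m i n : Wd m (letter i n) n.+1 *m Wd m i n.+1 = 1%:M.
Proof. by rewrite /Wd -alt_rev evalw_revK. Qed.
Lemma Wd_rev' m i n : Wd m i n.+1 *m Wd m (letter i n) n.+1 = 1%:M.
Proof. by rewrite /Wd -alt_rev evalw_Krev. Qed.

Lemma sqSS (T : pzRingType) (c : T) n : sq c n.+2 = 2%:R * c * sq c n.+1 - sq c n.
Proof. by []. Qed.

Definition rho m i n : vec := sq (cosm m) n.+1 *: al i + sq (cosm m) n *: al (flip i).

Lemma Wd_al m i n :
  Wd m i n *m al (letter i n) = rho m i n.+1 /\
  Wd m i n *m al (letter i n.+1) = - rho m i n.
Proof.
elim: n => [|n [IH1 IH2]].
  rewrite Wd0 !mul1mx /rho /= mulr0 sub0r opprK scale1r !scale0r addr0 add0r scaleN1r opprK.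
  by rewrite letterS.
split.
  rewrite WdS -mulmxA letterS gen_flip mulmxDr -scalemxAr -letterS IH2 IH1.
  rewrite /rho !sqSS; apply/matrixP => a b; rewrite !mxE; ring.
rewrite WdS -mulmxA letterSS gen_self mulmxN IH1.
done.
Qed.

Definition inrange (m : option nat) (n : nat) : bool :=
  match m with Some k => (n <= k)%N | None => true end.

Lemma sq_inf n : sq (cosm None) n = n%:R - 1.
Proof.
elim/ltn_ind: n => -[|[|n]] IH //=.
- by rewrite sub0r.
- by rewrite subrr.
rewrite -/(sq _ n.+1) (IH n.+1 (ltnSn _)) (IH n (leqW (ltnSn _))).
rewrite ?R1E !mulrS; ring.
Qed.

Lemma sq_pos_u m (hm : forall k, m = Some k -> (2 <= k)%N) j :
  (1 <= j)%N -> inrange m j.+1 -> 0 < sq (cosm m) j.+1.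
Proof.
case: m hm => [k|] hm h1 h2.
  apply/RltP; exact: (sq_pos (hm k erefl) h1 h2).
by rewrite sq_inf mulrSr addrK ltr0n.
Qed.

Lemma sq_nneg_u m (hm : forall k, m = Some k -> (2 <= k)%N) j :
  inrange m j -> 0 <= sq (cosm m) j.+1.
Proof.
case: m hm => [k|] hm h2.
  apply/RleP; exact: (sq_nneg (hm k erefl) h2).
by rewrite sq_inf mulrSr addrK ler0n.
Qed.

Lemma sq_ident (T : comPzRingType) (c : T) n q :
  sq c (n + q) * sq c q.+1 - sq c (n + q).+1 * sq c q = sq c n.+1.
Proof.
elim: q => [|q IH]; first by rewrite addn0 /= mulr0 mulrN1 sub0r opprK.
rewrite addnS (sqSS c q) (sqSS c (n + q)) -[RHS]IH; ring.
Qed.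

Lemma alE (i j : 'I_2) : al i j 0 = (i == j)%:R.
Proof. by rewrite /al mxE eqxx andbT eq_sym. Qed.

Lemma rho_ci m i n : (rho m i n) i 0 = sq (cosm m) n.+1.
Proof. by rewrite /rho mxE [in X in _ + X]mxE mxE !alE eqxx flip_eqF' mulr1 mulr0 addr0. Qed.
Lemma rho_cf m i n : (rho m i n) (flip i) 0 = sq (cosm m) n.
Proof. by rewrite /rho mxE [in X in _ + X]mxE mxE !alE eqxx flip_eqF mulr1 mulr0 add0r. Qed.
Lemma al_nneg l j : 0 <= al l j 0.
Proof. by rewrite alE ler0n. Qed.

Lemma oppc (x : vec) a : (- x) a 0 = - x a 0.
Proof. by rewrite mxE. Qed.

Lemma letter_flip i p : letter (flip i) p = flip (letter i p).
Proof. by rewrite /letter; case: (odd p). Qed.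

Lemma Wd_neq1 m (hm : forall k, m = Some k -> (2 <= k)%N) i p : (1 <= p)%N ->
  (forall k, m = Some k -> (p < k.*2)%N) -> Wd m i p <> 1%:M.
Proof.
move=> h1 h2 E; have [A1 A2] := Wd_al m i p; rewrite E !mul1mx in A1 A2.
have C2 := congr1 (fun x : vec => x i 0) A2; rewrite /= oppc rho_ci in C2.
have C1 := congr1 (fun x : vec => x i 0) A1; rewrite /= rho_ci in C1.
have C1' := congr1 (fun x : vec => x (flip i) 0) A1; rewrite /= rho_cf in C1'.
have N2 := al_nneg (letter i p.+1) i; have N1 := al_nneg (letter i p) i.
have N1' := al_nneg (letter i p) (flip i).
case E2 : (inrange m p.+1).
  have P := sq_pos_u hm h1 E2.
  by move: N2; rewrite C2 oppr_ge0 leNgt P.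
case: m hm h2 E E2 A1 A2 C1 C2 C1' => [k|] hm h2 E E2 A1 A2 C1 C2 C1' //.
have hk := hm k erefl; have hp := h2 k erefl.
rewrite /inrange ltnNge in E2; move/negbFE: E2 => E2.
rewrite leq_eqVlt in E2; case/orP: E2 => [/eqP Ek|Ek].
  subst p; move: N1; rewrite C1 /cosm (sq_k2 hk) leNgt => /negP; apply; apply/RltP; exact: (IZR_lt (Zneg xH) Z0 (erefl _)).
move: N1'; rewrite C1' leNgt => /negP; apply; have := sq_neg hk Ek hp; move/RltP; rewrite R0E; exact.
Qed.

Lemma rho_k1 k (hk : (2 <= k)%N) i : rho (Some k) i k.+1 = - al i.
Proof.
rewrite /rho /cosm (sq_k2 hk) (sq_k1 hk) R0E scale0r addr0.
by change (IZR (Zneg xH)) with (- (@GRing.one R)); rewrite scaleN1r.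
Qed.
Lemma rho_k k (hk : (2 <= k)%N) i : rho (Some k) i k = al (flip i).
Proof. by rewrite /rho /cosm (sq_k1 hk) (sq_k hk) R0E R1E scale0r add0r scale1r. Qed.

Lemma braid k (hk : (2 <= k)%N) i : Wd (Some k) i k = Wd (Some k) (flip i) k.
Proof.
apply: mx_ext => l.
have [A1 A2] := Wd_al (Some k) i k; have [B1 B2] := Wd_al (Some k) (flip i) k.
rewrite !letterS letter_flip in A2 B1 B2.
rewrite (rho_k1 hk) in A1; rewrite (rho_k1 hk) in B1.
rewrite (rho_k hk) in A2; rewrite (rho_k hk) !flipK in B2.
case: (jP (letter i k) l) => ->.
  by rewrite A1 B2.
by rewrite A2 B1.
Qed.

Lemma inrange_le m n p : inrange m n -> (p <= n)%N -> inrange m p.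
Proof. by case: m => //= k h1 h2; exact: leq_trans h2 h1. Qed.

Lemma inrange1 m (hm : forall k, m = Some k -> (2 <= k)%N) : inrange m 1.
Proof. by case: m hm => //= k hm; exact: leq_trans (hm k erefl). Qed.

Lemma gen_Wd_self m j n : gen m j *m Wd m j n.+1 = Wd m (flip j) n.
Proof. by rewrite Wd_cons mulmxA gen_invol mul1mx. Qed.
Lemma gen_Wd_flip m j n : gen m j *m Wd m (flip j) n = Wd m j n.+1.
Proof. by rewrite Wd_cons. Qed.

Lemma reduce m (hm : forall k, m = Some k -> (2 <= k)%N) w :
  exists i n, evalw m w = Wd m i n /\ (n <= size w)%N /\ inrange m n.
Proof.
elim: w => [|j w [i [n [E [Hs Hr]]]]].
  exists ord0, 0%N; rewrite evalw_nil Wd0; split=> //; split=> //; by case: m hm.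
rewrite evalw_cons E /=.
case: n E Hs Hr => [|n] E Hs Hr.
  exists j, 1%N; split; last by split; [|exact: inrange1].
  by rewrite Wd0 mulmx1 Wd_cons Wd0 mulmx1.
case: (jP j i) => Hi; subst i.
  exists (flip j), n; rewrite gen_Wd_self; split=> //; split.
    by rewrite (leq_trans (leqnSn n)) // (leq_trans Hs).
  exact: inrange_le Hr (leqnSn n).
case E2 : (inrange m n.+2).
  by exists j, n.+2; rewrite gen_Wd_flip.
case: m hm E Hr E2 => [k|] //= hm E Hr E2.
have Hk : n.+1 = k by apply/eqP; rewrite eqn_leq Hr leqNgt E2.
exists (flip j), n; split.
  by rewrite Hk (braid (hm k erefl)) flipK -Hk gen_Wd_self.
split; first by rewrite (leq_trans (leqnSn n)) // (leq_trans Hs).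
by rewrite -Hk leqnSn.
Qed.

Lemma letter_odd i p : odd p -> letter i p = flip i.
Proof. by rewrite /letter => ->. Qed.
Lemma letter_even i p : ~~ odd p -> letter i p = i.
Proof. by rewrite /letter => /negbTE ->. Qed.
Lemma odd_nSn n : odd (n + n.+1).
Proof. by rewrite addnS /= addnn odd_double. Qed.
Lemma even_nn n : ~~ odd (n + n).
Proof. by rewrite addnn odd_double. Qed.

Lemma small_p m n p : inrange m n -> (p < n + n)%N -> forall k, m = Some k -> (p < k.*2)%N.
Proof.
move=> Hr Hp k Ek; rewrite Ek /= in Hr.
by rewrite (leq_trans Hp) // -addnn leq_add.
Qed.

Lemma len_Wd m (hm : forall k, m = Some k -> (2 <= k)%N) i n :
  inrange m n -> has_len m (Wd m i n) n.
Proof.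
move=> Hr; split; first by exists (alt i n); rewrite size_alt.
move=> w Ew; have [j [n' [E [Hs Hr']]]] := reduce hm w.
apply: leq_trans Hs; case: (leqP n n') => // Hlt.
have Heq : Wd m j n' = Wd m i n by rewrite -E.
exfalso.
case: (jP i j) => Hj; subst j.
  have Hc : Wd m i n = Wd m i n' *m Wd m (letter i n') (n - n').
    by rewrite -Wd_cat subnKC // ltnW.
  have X1 : Wd m (letter i n') (n - n') = 1%:M.
    have := congr1 (mulmx (evalw m (rev (alt i n')))) Heq.
    by rewrite Hc mulmxA /Wd evalw_revK mul1mx => <-.
  apply: (Wd_neq1 hm _ _ X1); first by rewrite subn_gt0.
  apply: (small_p Hr); rewrite (leq_ltn_trans (leq_subr _ _)) //.
  by rewrite -addn1 leq_add2l (leq_ltn_trans _ Hlt).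
case: n' Heq Hlt Hr' E => [|n''] Heq Hlt Hr' E.
  rewrite Wd0 in Heq.
  apply: (Wd_neq1 hm Hlt _ (esym Heq)); apply: (small_p Hr).
  by rewrite -addn1 leq_add2l.
have X1 : Wd m (letter (flip i) n'') (n''.+1 + n) = 1%:M.
  rewrite Wd_cat letter_letter (letter_odd (flip i) (odd_nSn n'')) flipK.
  have := congr1 (mulmx (Wd m (letter (flip i) n'') n''.+1)) Heq.
  by rewrite Wd_rev => ->.
apply: (Wd_neq1 hm _ _ X1) => //.
by apply: (small_p Hr); rewrite ltn_add2r.
Qed.

Lemma has_len_uniq m x a b : has_len m x a -> has_len m x b -> a = b.
Proof.
move=> [[w [Hw Ew]] Ha] [[w' [Hw' Ew']] Hb]; apply/eqP; rewrite eqn_leq.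
by rewrite -{1}Hw' (Ha w' Ew') -{1}Hw (Hb w Ew).
Qed.

Lemma inW_Wd m i n : inW m (Wd m i n).
Proof. by exists (alt i n). Qed.

Lemma inW_len m (hm : forall k, m = Some k -> (2 <= k)%N) x : inW m x ->
  exists i n, x = Wd m i n /\ inrange m n /\ has_len m x n.
Proof.
move=> [w ->]; have [i [n [E [_ Hr]]]] := reduce hm w.
by exists i, n; rewrite E; split=> //; split=> //; exact: len_Wd.
Qed.

Lemma ct_len m x y : clos_trans mat (bruhat_step m) x y ->
  exists a b, has_len m x a /\ has_len m y b /\ (a < b)%N.
Proof.
elim => [x0 y0 [_ [t [_ [_ [a [b [H1 [H2 H3]]]]]]]]|x0 y0 z0 _ [a [b [H1 [H2 H3]]]] _ [b' [c [H1' [H2' H3']]]]].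
  by exists a, b.
exists a, c; split=> //; split=> //.
by rewrite (leq_trans H3) // (has_len_uniq H2 H1') ltnW.
Qed.

Lemma le_len m x y a b : bruhat_le m x y -> has_len m x a -> has_len m y b -> (a <= b)%N.
Proof.
case=> [->|H] Ha Hb; first by rewrite (has_len_uniq Ha Hb).
have [a' [b' [H1 [H2 H3]]]] := ct_len H.
by rewrite (has_len_uniq Ha H1) (has_len_uniq Hb H2) ltnW.
Qed.

Lemma lt_len m x y a b : bruhat_lt m x y -> has_len m x a -> has_len m y b -> (a < b)%N.
Proof.
case=> [[->|H] Hne] Ha Hb; first by [].
have [a' [b' [H1 [H2 H3]]]] := ct_len H.
by rewrite (has_len_uniq Ha H1) (has_len_uniq Hb H2).
Qed.

Lemma cover_of_step m x y n : bruhat_step m y x -> has_len m y n -> has_len m x n.+1 ->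
  bruhat_cover m y x.
Proof.
move=> Hs Hy Hx; split.
  split; first by right; apply: t_step.
  by move=> E; subst; have := has_len_uniq Hy Hx => /eqP; rewrite -[X in X == _]addn0 -addn1 eqn_add2l.
move=> z Hyz Hzx.
case: Hyz => [->|H1]; first by left.
case: Hzx => [->|H2]; first by right.
have [a [b [Ha [Hb Hab]]]] := ct_len H1.
have [b' [c [Hb' [Hc Hbc]]]] := ct_len H2.
rewrite -(has_len_uniq Hy Ha) in Hab; rewrite -(has_len_uniq Hx Hc) -(has_len_uniq Hb Hb') in Hbc.
by have := leq_trans Hab Hbc; rewrite ltnn.
Qed.

Lemma isRefl_gen m j : isRefl m (gen m j).
Proof.
exists (evalw m [::]), j; split; first by exists [::].
by rewrite invmx_evalw /= evalw_nil mul1mx mulmx1.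
Qed.

Lemma isRefl_conj m w j : isRefl m (evalw m w *m gen m j *m evalw m (rev w)).
Proof. by exists (evalw m w), j; split; [exists w | rewrite invmx_evalw]. Qed.

Lemma step_app m (hm : forall k, m = Some k -> (2 <= k)%N) i n :
  inrange m n.+1 -> bruhat_step m (Wd m i n) (Wd m i n.+1).
Proof.
move=> Hr; split; first exact: inW_Wd.
exists (gen m (letter i n)); split; first exact: isRefl_gen.
split; first by rewrite WdS.
exists n, n.+1; split; first by apply: len_Wd => //; exact: inrange_le Hr (leqnSn n).
by split=> //; exact: len_Wd.
Qed.

Lemma step_pre m (hm : forall k, m = Some k -> (2 <= k)%N) i n :
  inrange m n.+1 -> bruhat_step m (Wd m (flip i) n) (Wd m i n.+1).
Proof.
move=> Hr; split; first exact: inW_Wd.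
exists (evalw m (rev (alt (flip i) n)) *m gen m i *m evalw m (rev (rev (alt (flip i) n)))).
split; first exact: isRefl_conj.
split.
  rewrite revK !mulmxA /Wd evalw_Krev mul1mx; exact: (esym (gen_Wd_flip m i n)).
exists n, n.+1; split; first by apply: len_Wd => //; exact: inrange_le Hr (leqnSn n).
by split=> //; exact: len_Wd.
Qed.

Lemma step_any m (hm : forall k, m = Some k -> (2 <= k)%N) i' i n :
  inrange m n.+1 -> bruhat_step m (Wd m i' n) (Wd m i n.+1).
Proof.
move=> Hr; case: (jP i i') => ->; first exact: step_app.
exact: step_pre.
Qed.

Lemma chain m (hm : forall k, m = Some k -> (2 <= k)%N) i' i a c :
  inrange m c -> (a < c)%N -> clos_trans mat (bruhat_step m) (Wd m i' a) (Wd m i c).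
Proof.
elim: c i => [|c IH] i // Hr Hac.
rewrite ltnS leq_eqVlt in Hac; case/orP: Hac => [/eqP ->|Hac].
  by apply: t_step; exact: step_any.
apply: t_trans (IH i' (inrange_le Hr (leqnSn c)) Hac) _.
by apply: t_step; exact: step_any.
Qed.

Lemma le_Wd m (hm : forall k, m = Some k -> (2 <= k)%N) i' i a c :
  inrange m c -> (a < c)%N -> bruhat_le m (Wd m i' a) (Wd m i c).
Proof. by move=> H1 H2; right; exact: chain. Qed.

Lemma root_gen m j : root_of m (gen m j) (al j).
Proof.
split; first exact: isRefl_gen.
split=> //; split; last by move=> l; exact: al_nneg.
by exists (evalw m [::]), j; split; [exists [::] | rewrite evalw_nil mul1mx].
Qed.

Lemma rho_Wd m e n : rho m e n.+1 = Wd m e n *m al (letter e n).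
Proof. by have [-> _] := Wd_al m e n. Qed.

Lemma root_rho m (hm : forall k, m = Some k -> (2 <= k)%N) e n :
  inrange m n.+1 -> root_of m (refl m (rho m e n.+1)) (rho m e n.+1).
Proof.
move=> Hr; split.
  by rewrite rho_Wd /Wd refl_evalw; exact: isRefl_conj.
split=> //; split.
  by exists (Wd m e n), (letter e n); split; [exact: inW_Wd | rewrite rho_Wd].
move=> j; case: (jP e j) => ->.
  by rewrite rho_ci; exact: (sq_nneg_u hm).
by rewrite rho_cf; apply: (sq_nneg_u hm); exact: inrange_le Hr (leqnSn n).
Qed.

Lemma prodR m i b e : e = letter i b ->
  Wd m i b.+1 *m refl m (rho m e b.+1) = Wd m (flip i) b.
Proof.
move=> Ee; rewrite rho_Wd /Wd refl_evalw -/(Wd m e b).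
have He : letter e b = i by rewrite Ee letter_letter letter_even // even_nn.
have -> : gen m (letter e b) = gen m i by congr (gen m _); exact: He.
have H1 : Wd m i b.+1 *m Wd m e b = gen m i.
  have := Wd_rev' m i b; rewrite -Ee [Wd m e b.+1]WdS He => H.
  by rewrite -[LHS]mulmx1 -(gen_invol m i) mulmxA -(mulmxA (Wd m i b.+1)) H mul1mx.
rewrite !mulmxA -/(Wd m i b.+1) H1 gen_invol mul1mx.
case: b Ee He H1 => [|b] Ee He H1; first by [].
rewrite alt_rev -/(Wd m _ _) Ee letter_letter letter_odd ?flipK //.
by rewrite addSn /= addnn odd_double.
Qed.

Lemma prodR' m i a f : f = letter i a ->
  Wd m i a.+1 *m refl m (rho m f a.+2) = Wd m (flip i) a.+2.
Proof.
move=> Ef; rewrite rho_Wd /Wd refl_evalw -/(Wd m f a.+1).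
have Hf : letter f a.+1 = flip i by rewrite Ef letter_letter letter_odd // odd_nSn.
rewrite Hf alt_rev -/(Wd m _ _).
have Hf' : letter f a = i by rewrite Ef letter_letter letter_even // even_nn.
rewrite Hf' !mulmxA -/(Wd m i a.+1) Ef Wd_rev' mul1mx.
by rewrite -{2}(flipK i) gen_Wd_flip.
Qed.

Lemma letter_inj x y p : letter x p = letter y p -> x = y.
Proof. by rewrite /letter; case: (odd p) => // /(congr1 flip); rewrite !flipK. Qed.

Lemma Wd_gen_last m i n : Wd m i n.+1 *m gen m (letter i n) = Wd m i n.
Proof. by rewrite WdS -mulmxA gen_invol mulmx1. Qed.

Lemma cone1 (A : vec -> Prop) x : A x -> Cone A x.
Proof.
move=> Hx; exists 1%N, (fun _ => 1), (fun _ => x); split; first by move=> _; split.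
by rewrite big_ord1 scale1r.
Qed.

Lemma cone2 (A : vec -> Prop) x y p q : A x -> A y -> 0 <= p -> 0 <= q ->
  Cone A (p *: x + q *: y).
Proof.
move=> Hx Hy Hp Hq.
exists 2%N, (fun k => if k == ord0 then p else q), (fun k => if k == ord0 then x else y).
split; first by move=> k; case: (k == ord0).
by rewrite !big_ord_recl big_ord0 addr0.
Qed.

Definition RsP m (u v : mat) (beta : vec) := exists t, root_of m t beta /\
              bruhat_le m u (v *m t) /\ bruhat_cover m (v *m t) v.
Definition Rs'P m (u v : mat) (beta : vec) := exists t, root_of m t beta /\
              bruhat_cover m u (u *m t) /\ bruhat_le m (u *m t) v.

Lemma main_Wd m (hm : forall k, m = Some k -> (2 <= k)%N) i' i a b :
  inrange m a -> inrange m b.+1 -> (a <= b)%N ->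
  (exists beta, RsP m (Wd m i' a) (Wd m i b.+1) beta /\
      Cone (Rs'P m (Wd m i' a) (Wd m i b.+1)) beta) /\
  (exists beta, Rs'P m (Wd m i' a) (Wd m i b.+1) beta /\
      Cone (RsP m (Wd m i' a) (Wd m i b.+1)) beta).
Proof.
move=> Hra Hrb Hab.
set e := letter i b.
have Hrb' : inrange m b := inrange_le Hrb (leqnSn b).
have RsE : forall x, bruhat_le m x (Wd m i b) -> RsP m x (Wd m i b.+1) (al e).
  move=> x Hle; exists (gen m e); split; first exact: root_gen.
  rewrite /e Wd_gen_last; split=> //.
  apply: (cover_of_step (step_app hm i Hrb)); exact: len_Wd.
have RsR : forall x, bruhat_le m x (Wd m (flip i) b) -> RsP m x (Wd m i b.+1) (rho m e b.+1).
  move=> x Hle; exists (refl m (rho m e b.+1)); split; first exact: root_rho.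
  rewrite (prodR m (erefl e)); split=> //.
  apply: (cover_of_step (step_pre hm i Hrb)); exact: len_Wd.
have caseA : forall j, letter j a = e ->
  (exists beta, RsP m (Wd m j a) (Wd m i b.+1) beta /\
      Cone (Rs'P m (Wd m j a) (Wd m i b.+1)) beta) /\
  (exists beta, Rs'P m (Wd m j a) (Wd m i b.+1) beta /\
      Cone (RsP m (Wd m j a) (Wd m i b.+1)) beta).
  move=> j Hje.
  have Hra1 : inrange m a.+1 := inrange_le Hrb (Hab : (a.+1 <= b.+1)%N).
  have Rs'E : Rs'P m (Wd m j a) (Wd m i b.+1) (al e).
    exists (gen m e); split; first exact: root_gen.
    rewrite -Hje -WdS; split.
      apply: (cover_of_step (step_app hm j Hra1)); exact: len_Wd.
    move: Hab; rewrite leq_eqVlt; case/orP => [/eqP Hb|Hb]; last exact: le_Wd.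
    subst b; have -> : j = i by apply: (letter_inj Hje).
    by left.
  have RsE' : RsP m (Wd m j a) (Wd m i b.+1) (al e).
    apply: RsE.
    move: Hab; rewrite leq_eqVlt; case/orP => [/eqP Hb|Hb]; last exact: le_Wd.
    subst b; have -> : j = i by apply: (letter_inj Hje).
    by left.
  by split; exists (al e); split=> //; apply: cone1.
case: a Hra Hab caseA => [|a] Hra Hab caseA.
  by rewrite !Wd0 -(Wd0 m e); apply: (caseA e).
case Hle : (letter i' a.+1 == e); first by apply: (caseA i'); apply/eqP.
have Hf : letter i' a = e.
  move/negbT: Hle; rewrite letterS eq_sym => /neq_flip H.
  by rewrite -[LHS]flipK H flipK.
have Hle' : letter i' a.+1 = flip e by rewrite letterS Hf.
have Hra2 : inrange m a.+2 := inrange_le Hrb (Hab : (a.+2 <= b.+1)%N).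
have Hra1 : inrange m a.+1 := inrange_le Hra2 (leqnSn _).
have G1 : bruhat_le m (Wd m (flip i') a.+2) (Wd m i b.+1) ->
    Rs'P m (Wd m i' a.+1) (Wd m i b.+1) (rho m e a.+2).
  move=> Hle2; exists (refl m (rho m e a.+2)); split; first exact: root_rho.
  rewrite (prodR' m (esym Hf)); split=> //.
  apply: (cover_of_step (step_any hm i' (flip i') Hra2)); exact: len_Wd.
move: Hab; rewrite leq_eqVlt; case/orP => [/eqP Hb|Hb].
  subst b.
  have Hi : i' = flip i.
    apply: (@letter_inj _ _ a); rewrite Hf /e letterS letter_flip //.
  have R1 : RsP m (Wd m i' a.+1) (Wd m i a.+2) (rho m e a.+2).
    by apply: RsR; rewrite Hi; left.
  have R2 : Rs'P m (Wd m i' a.+1) (Wd m i a.+2) (rho m e a.+2).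
    by apply: G1; rewrite Hi flipK; left.
  by split; exists (rho m e a.+2); split=> //; apply: cone1.
have R1 : RsP m (Wd m i' a.+1) (Wd m i b.+1) (rho m e b.+1).
  by apply: RsR; apply: le_Wd.
have R2 : RsP m (Wd m i' a.+1) (Wd m i b.+1) (al e).
  by apply: RsE; apply: le_Wd.
have R3 : Rs'P m (Wd m i' a.+1) (Wd m i b.+1) (rho m e a.+2).
  by apply: G1; apply: le_Wd.
have R4 : Rs'P m (Wd m i' a.+1) (Wd m i b.+1) (al (flip e)).
  exists (gen m (flip e)); split; first exact: root_gen.
  rewrite -Hle' -WdS; split; last by apply: le_Wd.
  apply: (cover_of_step (step_app hm i' Hra2)); exact: len_Wd.
set X := sq (cosm m).
have Xa3 : 0 < X a.+3 by apply: (sq_pos_u hm) => //; exact: inrange_le Hrb (Hb : (a.+3 <= b.+1)%N).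
have Xb1 : 0 < X b.+1 by apply: (sq_pos_u hm) => //; apply: leq_trans Hb.
have Xb2 : 0 <= X b.+2 by apply: (sq_nneg_u hm).
have Xa2 : 0 <= X a.+2 by apply: (sq_nneg_u hm).
have Id : 0 <= X b.+1 * X a.+3 - X b.+2 * X a.+2.
  have := sq_ident (cosm m) (b - a.+1) a.+2.
  rewrite addnS subnK; last exact: ltnW Hb.
  move=> ->; apply: (sq_nneg_u hm); exact: inrange_le Hrb' (leq_subr _ _).
split.
  exists (rho m e b.+1); split=> //.
  have -> : rho m e b.+1 = (X b.+2 / X a.+3) *: rho m e a.+2 +
     ((X b.+1 * X a.+3 - X b.+2 * X a.+2) / X a.+3) *: al (flip e).
    apply/matrixP => r s; rewrite /rho !mxE -/X; field.
    by rewrite lt0r_neq0.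
  by apply: cone2 => //; apply: divr_ge0 => //; apply: ltW.
exists (rho m e a.+2); split=> //.
have -> : rho m e a.+2 = ((X a.+3 * X b.+1 - X a.+2 * X b.+2) / X b.+1) *: al e +
   (X a.+2 / X b.+1) *: rho m e b.+1.
  apply/matrixP => r s; rewrite /rho !mxE -/X; field.
  by rewrite lt0r_neq0.
apply: cone2 => //; apply: divr_ge0 => //; try exact: ltW.
by rewrite mulrC [X a.+2 * _]mulrC.
Qed.

Theorem proposition3p7 (m : option nat)
  (hm : forall k, m = Some k -> (2 <= k)%N)
  (u v : mat) (hu : inW m u) (hv : inW m v) (huv : bruhat_lt m u v) :
  let Rs := fun beta => exists t, root_of m t beta /\
              bruhat_le m u (v *m t) /\ bruhat_cover m (v *m t) v in
  let Rs' := fun beta => exists t, root_of m t beta /\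
              bruhat_cover m u (u *m t) /\ bruhat_le m (u *m t) v in
  (exists beta, Rs beta /\ Cone Rs' beta) /\
  (exists beta, Rs' beta /\ Cone Rs beta).
Proof.
have [i' [a [Eu [Hra Hlu]]]] := inW_len hm hu.
have [i [b [Ev [Hrb Hlv]]]] := inW_len hm hv.
have Hab := lt_len huv Hlu Hlv.
clear huv hu hv; subst u v.
case: b Hab Hrb Hlv => [//|b] Hab Hrb Hlv.
exact: (main_Wd hm i' i Hra Hrb Hab).
Qed.
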